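(* Under the hypotheses of the preceding theorem (weighted species $\mathcal{F}^\upsilon,\mathcal{G}^\gamma$ with $\mathcal{G}^\gamma(z)=\sum_ia_iz^i$ of radius of convergence $0$, $\mathcal{F}^\upsilon(z)$ of positive radius of convergence, $a_i=0$ unless $i\equiv1\pmod d$ for some $d\ge1$, $a_i>0$ for all $i\ge I$ with $i\equiv 1\pmod d$, and $\sum_{i_1+\dots+i_k=n,\ 1\le i_j<n-(k-1)}a_{i_1}\cdots a_{i_k}=o(a_{n-(k-1)})$ for every $k\ge2$), assume additionally that $[z^1]\mathcal{F}^\upsilon(z)>0$ and $a_1,a_2>0$. Then the random composite structure $\mathsf{S}_n$ drawn from $(\mathcal{F}^\upsilon\circ\mathcal{G}^\gamma)[[n]]$ with probability proportional to its weight consists of a single component with probability tending to $1$ as $n\to\infty$.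
   Context: A weighted species $\mathcal{F}^\upsilon$ assigns to each finite set $U$ a finite set $\mathcal{F}[U]$, functorial transport bijections, and relabelling-invariant weights $\upsilon\ge0$; $\mathcal{F}^\upsilon(z)=\sum_n|\mathcal{F}[n]|_\upsilon z^n/n!$ with $|\mathcal{F}[n]|_\upsilon$ the total weight of $\mathcal{F}[\{1,\dots,n\}]$. The composition $\mathcal{F}\circ\mathcal{G}$ (for $\mathcal{G}[\emptyset]=\emptyset$) has structures $(\pi,F,(G_Q)_{Q\in\pi})$ on $U$, with $\pi$ a partition of $U$ into non-empty blocks, $F\in\mathcal{F}[\pi]$, $G_Q\in\mathcal{G}[Q]$, weight $\upsilon(F)\prod_Q\gamma(G_Q)$; the $G_Q$ are its components. *)

(* Defs.v *)
From mathcomp Require Import all_boot.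
From Stdlib Require Import Reals.

Set Implicit Arguments.
Unset Strict Implicit.
Unset Printing Implicit Defensive.

Definition rsum_list (l : list R) : R := List.fold_right Rplus 0%R l.
Definition rprod_list (l : list R) : R := List.fold_right Rmult 1%R l.

(* A weighted species is represented by its sequence of total weights
   w n = |F[n]|_upsilon (relabelling invariance makes |F[U]|_upsilon depend
   only on #|U|). *)
Definition egf_coef (w : nat -> R) (n : nat) : R := (w n / INR (Stdlib.Arith.Factorial.fact n))%R.

Definition set_partitions (n : nat) : {set {set {set 'I_n}}} :=
  [set P : {set {set 'I_n}} | partition P [set: 'I_n]].

(* Weight of the composite structures (pi, F, (G_Q)) with pi in a given event:
   summing over F in F[pi] and G_Q in G[Q] gives f(#|pi|) * prod_Q g(#|Q|). *)
Definition comp_weight (f g : nat -> R) (n : nat)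
    (E : {set {set 'I_n}} -> bool) : R :=
  rsum_list [seq (f #|P| * rprod_list [seq g #|B| | B : {set 'I_n} <- enum P])%R
            | P : {set {set 'I_n}} <- enum (set_partitions n) & E P].

Arguments comp_weight f g n E : clear implicits.

Definition prob_single_component (f g : nat -> R) (n : nat) : R :=
  (comp_weight f g n (fun P => #|P| == 1%nat) /
   comp_weight f g n (fun _ => true))%R.

Fixpoint csum (a : nat -> R) (k n m : nat) : R :=
  match k with
  | O => if n == 0%nat then 1%R else 0%R
  | S k' => rsum_list [seq (if (i <= n)%nat then a i * csum a k' (n - i) m
                            else 0)%R | i <- iota 1 (m - 1)]
  end.

Definition conv_sum (a : nat -> R) (k n : nat) : R := csum a k n (n - (k - 1)).

(* Main.v *)
Require Import Defs.
From mathcomp Require Import all_boot.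
From Stdlib Require Import Reals.
From mathcomp Require Import all_order all_algebra.
From mathcomp Require Import Rstruct.
From mathcomp Require Import ring lra zify.
Import Order.TTheory GRing.Theory Num.Theory.
Set Implicit Arguments.
Unset Strict Implicit.
Unset Printing Implicit Defensive.
Local Open Scope ring_scope.

Section Comb.
Variable n : nat.
Variable g : nat -> R.
Hypothesis hg0 : g 0 = 0.

Lemma setU1K' (T : finType) (a : T) (B : {set T}) : a \in B -> (a |: B) :\ a = B :\ a.
Proof. by move=> aB; apply/setP => x; rewrite !inE; case: (x == a). Qed.

Definition Om k (U : {set 'I_n}) : R :=
  \sum_(P : {set {set 'I_n}} | partition P U && (#|P| == k)) \prod_(B in P) g #|B|.

Lemma Om_rec k U : (k.+1)%:R * Om k.+1 U =
  \sum_(S : {set 'I_n} | (S \subset U) && (S != set0)) g #|S| * Om k (U :\: S).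
Proof.
rewrite /Om mulr_sumr.
transitivity (\sum_(P : {set {set 'I_n}} | partition P U && (#|P| == k.+1))
   \sum_(S in P) g #|S| * \prod_(B in P :\ S) g #|B|).
  apply: eq_bigr => P /andP[_ /eqP cP].
  transitivity (\sum_(S in P) \prod_(B in P) g #|B|).
    by rewrite sumr_const cP mulr_natl.
  by apply: eq_bigr => S SP; rewrite (bigD1 S SP) /=; congr (_ * _); apply: eq_bigl => B; rewrite !inE andbC.
rewrite (exchange_big_dep (fun S : {set 'I_n} => (S \subset U) && (S != set0))) /=; last first.
  by move=> P S /andP[pP _] SP; rewrite (partitionS pP SP) (partition_neq0 pP SP).
apply: eq_bigr => S /andP[SU S0].
rewrite mulr_sumr.
rewrite (reindex_onto (fun Q => S |: Q) (fun P => P :\ S)) /=; last first.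
  by move=> P /andP[_ SP]; rewrite setD1K.
apply: eq_big => [Q|Q /andP[_ /eqP QE]]; last first.
  by congr (_ * _); rewrite -{2}QE; apply: eq_bigl => B; rewrite !inE andbC.
have Hd : [disjoint S & U :\: S].
  by rewrite -setI_eq0; apply/eqP/setP => x; rewrite !inE; case: (x \in S); rewrite ?andbF.
have HU : S :|: (U :\: S) = U.
  apply/setP => x; rewrite !inE; case xS: (x \in S) => //=.
  by rewrite (subsetP SU x xS).
case: (boolP (S \in Q)) => SQ.
  have -> : ((S |: Q) :\ S == Q) = false.
    apply/negbTE; rewrite setU1K' //; apply/eqP => E.
    by move: SQ; rewrite -E !inE eqxx.
  rewrite andbF; symmetry; apply/negbTE; apply/negP => /andP[pQ _].
  have := partitionS pQ SQ; rewrite subsetD => /andP[_].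
  rewrite -setI_eq0 setIid; exact/negP.
rewrite setU1K // eqxx setU11 andbT cardsU1 SQ add1n eqSS andbT.
have -> : partition (S |: Q) U = partition Q (U :\: S); last by [].
apply/idP/idP => pQ.
  by have := partitionD1 pQ (setU11 S Q); rewrite setU1K.
by rewrite -HU; apply: partitionU1.
Qed.

Lemma sum_subsets (U : {set 'I_n}) (F : nat -> R) :
  \sum_(S : {set 'I_n} | S \subset U) F #|S| =
  \sum_(s < #|U|.+1) 'C(#|U|, s)%:R * F s.
Proof.
rewrite (partition_big (fun S : {set 'I_n} => (inord #|S| : 'I_(#|U|.+1))) xpredT) //=.
apply: eq_bigr => s _.
transitivity (\sum_(S : {set 'I_n} | S \in [set S : {set 'I_n} | S \subset U & #|S| == s]) F s).
  apply: eq_big => S; rewrite ?inE.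
    apply/andP/andP => -[SU E]; split => //.
      by rewrite -(eqP E) inordK // ltnS subset_leq_card.
    by apply/eqP/val_inj; rewrite /= inordK ?(eqP E) // ltnS subset_leq_card.
  case/andP => SU /eqP <-; rewrite inordK // ltnS subset_leq_card //.
by rewrite sumr_const cards_draws mulr_natl.
Qed.

Lemma Om0 U : Om 0 U = (U == set0)%:R.
Proof.
rewrite /Om (eq_bigl (fun P => (P == set0) && (U == set0))); last first.
  move=> P; rewrite cards_eq0; case: (boolP (P == set0)) => [/eqP ->|]; last by rewrite andbF.
  have C0 : cover (set0 : {set {set 'I_n}}) = set0 by rewrite /cover big_set0.
  by rewrite /partition C0 inE /trivIset big_set0 C0 cards0 !eqxx andbT eq_sym /= andbT.
case: (boolP (U == set0)) => U0.
  by rewrite (big_pred1 set0) ?big_set0 // => P; rewrite andbT.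
by rewrite big_pred0 // => P; rewrite andbF.
Qed.

End Comb.

Fixpoint tt (a : nat -> R) k m : R :=
  match k with
  | 0 => (m == 0)%:R
  | k'.+1 => \sum_(s < m.+1) a s * tt a k' (subn m s)
  end.

Section Comb2.
Variable n : nat.
Variable g : nat -> R.
Hypothesis hg0 : g 0 = 0.
Let a s := g s / (s`!)%:R.

Lemma Om_tt k (U : {set 'I_n}) : Om g k U = (#|U|`!)%:R / (k`!)%:R * tt a k #|U|.
Proof.
elim: k U => [|k IH] U.
  rewrite Om0 /= fact0 divr1; case: (eqVneq U set0) => [->|U0]; first by rewrite cards0 /= mulr1.
  have U0' : (#|U| == 0%N) = false by apply/negbTE; rewrite cards_eq0.
  by rewrite U0' mulr0.
have kf : (k.+1)%:R * (k`!)%:R != 0 :> R by rewrite -natrM pnatr_eq0 -lt0n muln_gt0 fact_gt0.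
apply: (mulfI (x := (k.+1)%:R)); first by rewrite pnatr_eq0.
rewrite Om_rec.
transitivity (\sum_(S : {set 'I_n} | S \subset U)
   g #|S| * ((subn #|U| #|S|)`!%:R / (k`!)%:R * tt a k (subn #|U| #|S|))).
  rewrite [RHS](bigID (fun S => S != set0)) /= [X in _ = _ + X]big1 ?addr0; last first.
    by move=> S /andP[_] /negPn /eqP ->; rewrite cards0 hg0 mul0r.
  by apply: eq_bigr => S /andP[SU _]; rewrite IH cardsDS.
rewrite (sum_subsets U (fun s => g s * ((subn #|U| s)`!%:R / (k`!)%:R * tt a k (subn #|U| s)))).
rewrite /= !mulr_sumr; apply: eq_bigr => [[s sU]] _ /=; rewrite ltnS in sU.
have := bin_fact sU => E.
rewrite /a factS natrM.
have sf : (s`!)%:R != 0 :> R by rewrite pnatr_eq0 -lt0n fact_gt0.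
have kf' : (k`!)%:R != 0 :> R by rewrite pnatr_eq0 -lt0n fact_gt0.
rewrite -E !natrM.
field.
by rewrite sf kf' /= addrC natr1 pnatr_eq0.
Qed.
End Comb2.

Section Anal.
Variable a : nat -> R.
Hypothesis ha0 : a 0 = 0.
Hypothesis hapos : forall i, 0 <= a i.
Hypothesis ha1 : 0 < a 1.
Hypothesis ha2 : 0 < a 2.

Definition conv2 n := \sum_(2 <= i < subn n 1) a i * a (subn n i).
Definition convf m := \sum_(s < m.+1) a s * a (subn m s).
Definition ee j := \sum_(i < j.+1) a i.
Definition PP j := \sum_(s < j.+1) a s * ee (subn j.+1 s).

Lemma conv2_ge0 n : 0 <= conv2 n.
Proof. by apply: sumr_ge0 => i _; apply: mulr_ge0. Qed.

Lemma convf_ge0 n : 0 <= convf n.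
Proof. by apply: sumr_ge0 => i _; apply: mulr_ge0. Qed.

Lemma ee_ge0 j : 0 <= ee j.
Proof. by apply: sumr_ge0. Qed.

Lemma eeS j : ee j.+1 = ee j + a j.+1.
Proof. by rewrite /ee big_ord_recr. Qed.

Lemma a_le_ee j : a j <= ee j.
Proof. elim: j => [|j _]; first by rewrite /ee big_ord_recl big_ord0 addr0.
rewrite eeS; have := ee_ge0 j; lra. Qed.

Lemma ee_ge_a1 j : (1 <= j)%nat -> a 1 <= ee j.
Proof. elim: j => // j IH; case: j IH => [|j] IH _.
  by rewrite eeS /ee big_ord_recl big_ord0 ha0; lra.
rewrite eeS; have := IH isT; have := hapos j.+2; lra. Qed.

Lemma convf_split k : convf k.+3 = 2%:R * (a 1 * a k.+2) + conv2 k.+3.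
Proof.
rewrite /convf /conv2 big_ord_recl big_ord_recl !big_ord_recr /= /bump /= !add1n.
have -> : subn k.+3 1 = k.+2 by lia.
have -> : subn k.+3 k.+2 = 1%nat by lia.
have -> : subn k.+3 k.+3 = 0%nat by lia.
rewrite ha0 mul0r mulr0 add0r addr0.
rewrite (big_addn 0 _ 2) big_mkord.
have -> : subn k.+2 2 = k by lia.
have E : forall i : 'I_k, a (i.+1).+1 * a (subn k.+3 (i.+1).+1) = a (i + 2) * a (subn k.+3 (i + 2)).
  by move=> i; rewrite addn2.
rewrite (eq_bigr _ (fun i _ => E i)).
set S := \sum_(i < k) _. rewrite [a k.+2 * a 1]mulrC. lra.
Qed.

Hypothesis hconv : forall eps, 0 < eps -> exists N, forall n, (N <= n)%nat -> conv2 n <= eps * a (subn n 1).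

Lemma ratio d : 0 < d -> exists N, forall m, (N <= m)%nat -> a m <= d * a m.+1.
Proof.
move=> d0; have [N HN] := hconv (mulr_gt0 d0 ha2).
exists (maxn N 2) => m; rewrite geq_max => /andP[Nm m2].
have : (N <= m.+2)%nat by lia.
move/HN.
have -> : subn m.+2 1 = m.+1 by lia.
rewrite /conv2.
have -> : subn m.+2 1 = m.+1 by lia.
rewrite big_ltn; last by lia.
have -> : subn m.+2 2 = m by lia.
have := @sumr_ge0 _ _ (index_iota 3 m.+1) xpredT (fun i => a i * a (subn m.+2 i)) (fun i _ => mulr_ge0 (hapos _) (hapos _)).
move=> H1 H2.
have H3 : a 2 * a m <= a 2 * (d * a m.+1) by rewrite mulrA [a 2 * d]mulrC; lra.
by rewrite ler_pM2l in H3.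
Qed.

Lemma PPS j : PP j.+1 = PP j + convf j.+2.
Proof.
rewrite /PP /convf.
have E : forall s : 'I_j.+2, a s * ee (subn j.+2 s) = a s * ee (subn j.+1 s) + a s * a (subn j.+2 s).
  move=> [s /= sj]; have -> : subn j.+2 s = (subn j.+1 s).+1 by lia.
  by rewrite eeS mulrDr.
rewrite (eq_bigr _ (fun s _ => E s)) big_split /=.
rewrite [in RHS](big_ord_recr j.+2) /= subnn ha0 mulr0 addr0.
rewrite big_ord_recr /= subnn (_ : ee 0 = 0) ?mulr0 ?addr0 //.
by rewrite /ee big_ord_recl big_ord0 ha0 addr0.
Qed.

Lemma PP_le_ex : exists C, 0 < C /\ forall j, (1 <= j)%nat -> PP j <= C * ee j.
Proof.
have [N HN] := hconv ltr01.
pose N' := maxn N 3.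
have HN' : forall m, (N' <= m)%nat -> convf m <= (2%:R * a 1 + 1) * a (subn m 1).
  move=> m; rewrite geq_max => /andP[Nm m3].
  have := HN m Nm; case: m Nm m3 => [|[|[|k]]] // Nm _.
  rewrite convf_split; have -> : subn k.+3 1 = k.+2 by lia. lra.
pose K := PP N'.
have mono : forall i j, (i <= j)%nat -> PP i <= PP j.
  move=> i j /subnK <-; elim: (subn j i) => [|t IH]; first by rewrite add0n.
  by rewrite addSn PPS; have := convf_ge0 (t + i).+2; lra.
have K0 : 0 <= K.
  by apply: sumr_ge0 => s _; apply: mulr_ge0 => //; apply: ee_ge0.
have main : forall j, PP j <= K + (2%:R * a 1 + 1) * ee j.
  move=> j; case: (leqP j N') => jN.
    have := mono _ _ jN; have := ee_ge0 j; have := ha1; rewrite -/K; nra.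
  move/ltnW/subnK: jN => <-; elim: (subn j N') => [|t IH].
    rewrite add0n -/K; have := ee_ge0 N'; have := ha1; nra.
  rewrite addSn PPS eeS.
  have := HN' (t + N').+2; rewrite (_ : subn (t + N').+2 1 = (t + N').+1); last by lia.
  move/(_ (leq_trans (leq_addl t N') (leq_trans (leqnSn _) (leqnSn _)))).
  have := hapos (t + N').+1; have := ha1. nra.
exists (K / a 1 + (2%:R * a 1 + 1)); split.
  have : 0 <= K / a 1 by apply: divr_ge0 => //; lra.
  have := ha1; lra.
move=> j j1; have := main j; have := ee_ge_a1 j1.
have : K <= K / a 1 * ee j.
  have := ee_ge_a1 j1 => h.
  have e1 : K / a 1 * a 1 = K by rewrite divfK // lt0r_neq0.
  rewrite -{1}e1; apply: ler_wpM2l => //; apply: divr_ge0 => //; lra.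
lra.
Qed.

Lemma tt_ge0 k m : 0 <= tt a k m.
Proof.
elim: k m => [|k IH] m /=; first by case: (m == 0%nat).
by apply: sumr_ge0 => s _; apply: mulr_ge0.
Qed.

Lemma tt_small k m : (m < k)%nat -> tt a k m = 0.
Proof.
elim: k m => [|k IH] m //= mk.
apply: big1 => [[s /= sm]] _.
case: s sm => [|s] sm; first by rewrite ha0 mul0r.
by rewrite IH ?mulr0 //; lia.
Qed.

Lemma tt0 m : (1 <= m)%nat -> tt a 0 m = 0.
Proof. by case: m. Qed.

Lemma tt1 m : tt a 1 m = a m.
Proof.
rewrite /= big_ord_recr /= subnn eqxx mulr1 big1 ?add0r // => [[s /= sm]] _.
have -> : (subn m s == 0%nat) = false by apply/negbTE; lia.
by rewrite mulr0.
Qed.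

Lemma tt_bound C : 0 <= C -> (forall j, (1 <= j)%nat -> PP j <= C * ee j) ->
  forall k m, (k < m)%nat -> tt a k.+1 m <= C ^+ k * ee (subn m k).
Proof.
move=> C0 HC; elim=> [|k IH] m km.
  by rewrite tt1 expr0 mul1r subn0 a_le_ee.
pose j := subn m k.+1.
have j1 : (1 <= j)%nat by rewrite /j; lia.
have -> : tt a k.+2 m = \sum_(s < m.+1) a s * tt a k.+1 (subn m s) by [].
apply: (@le_trans _ _ (\sum_(s < m.+1) if (s < j.+1)%nat then C ^+ k * (a s * ee (subn j.+1 s)) else 0)).
  apply: ler_sum => [[s sm]] _; rewrite [nat_of_ord _]/=.
  case: ifP => sj.
    have h : (k < subn m s)%nat by rewrite /j in sj; lia.
    have := IH _ h; have -> : subn (subn m s) k = subn j.+1 s by rewrite /j; lia.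
    move=> h2; rewrite mulrCA; apply: ler_wpM2l => //.
  rewrite tt_small ?mulr0 //; rewrite /j in sj; lia.
rewrite -big_mkcond /= -(big_ord_widen _ (fun s => C ^+ k * (a s * ee (subn j.+1 s)))); last by rewrite /j; lia.
rewrite -mulr_sumr -/(PP j).
have -> : subn m k.+1 = j by [].
rewrite exprSr -mulrA; apply: ler_wpM2l; first by apply: exprn_ge0.
exact: HC.
Qed.

Hypothesis hI : exists I, forall i, (I <= i)%nat -> 0 < a i.

Lemma ee_le_a : exists B N, 0 < B /\ forall n, (N <= n)%nat -> ee n <= B * a n.
Proof.
have h2pos : 0 < (2%:R : R)^-1 by rewrite invr_gt0 ltr0n.
have [N0 HN0] := ratio h2pos.
have [I HI] := hI.
pose N := maxn N0 I.
have aN : 0 < a N by apply: HI; rewrite leq_maxr.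
exists (Num.max 2%:R (ee N / a N)), N; split.
  by rewrite lt_max ltr0n.
move=> n /subnK <-; elim: (subn n N) => [|t IH].
  rewrite add0n -ler_pdivrMr // le_max lexx orbT //.
rewrite addSn eeS.
have h1 := HN0 (t + N) (leq_trans (leq_maxl N0 I) (leq_addl t N)).
have h2 : 2%:R <= Num.max 2%:R (ee N / a N) by rewrite le_max lexx.
set B := Num.max _ _ in IH h2 *.
have := hapos (t + N); have := hapos (t + N).+1.
nra.
Qed.

Lemma ee_ratio d : 0 < d -> exists N, forall n, (N <= n)%nat -> ee n <= d * ee n.+1.
Proof.
move=> d0; have [B [N1 [B0 HB]]] := ee_le_a.
have [N2 HN2] := ratio (divr_gt0 d0 B0).
exists (maxn N1 N2) => n; rewrite geq_max => /andP[h1 h2].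
have := HB n h1; have := HN2 n h2; have := a_le_ee n.+1; have := hapos n.+1.
have e : B * (d / B) = d by rewrite mulrC divfK // lt0r_neq0.
move=> p1 p2 p3 p4.
have p5 : B * a n <= B * (d / B * a n.+1) by apply: ler_wpM2l => //; lra.
rewrite mulrA e in p5.
have p6 : d * a n.+1 <= d * ee n.+1 by apply: ler_wpM2l => //; lra.
lra.
Qed.

Definition YY E n := \sum_(j < n) E ^+ j.+1 * ee (subn n.-1 j).

Lemma YYS E n : YY E n.+1 = E * ee n + E * YY E n.
Proof.
rewrite /YY big_ord_recl /= expr1 subn0 mulr_sumr; congr (_ + _).
rewrite mulr_sumr; apply: eq_bigr => j _; rewrite /bump /= add1n exprS mulrA.
by have -> : subn n j.+1 = subn n.-1 j by lia.
Qed.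

Lemma YY_ge0 E n : 0 <= E -> 0 <= YY E n.
Proof. move=> E0; apply: sumr_ge0 => j _; apply: mulr_ge0; [exact: exprn_ge0|exact: ee_ge0]. Qed.

Lemma ee_pos n : (1 <= n)%nat -> 0 < ee n.
Proof. move=> h; have := ee_ge_a1 h; have := ha1; lra. Qed.

Lemma YY_small E : 0 <= E -> forall eps, 0 < eps -> exists N, forall n, (N <= n)%nat -> YY E n <= eps * ee n.
Proof.
move=> E0 eps eps0.
have dpos : 0 < (2%:R * (E + 1))^-1 by rewrite invr_gt0; lra.
have [N1 HN1] := ee_ratio dpos.
pose N := maxn N1 1.
have eN : 0 < ee N by apply: ee_pos; rewrite leq_maxr.
pose H := Num.max 1 (YY E N / ee N).
have H1 : 1 <= H by rewrite le_max lexx.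
have Ed : E * (2%:R * (E + 1))^-1 <= 2%:R^-1.
  rewrite ler_pdivrMr; last lra.
  rewrite mulrA mulVf ?pnatr_eq0 // mul1r; lra.
have bound : forall n, (N <= n)%nat -> YY E n <= H * ee n.
  move=> n /subnK <-; elim: (subn n N) => [|t IH].
    by rewrite add0n -ler_pdivrMr // le_max lexx orbT.
  rewrite addSn YYS.
  have r := HN1 (t + N) (leq_trans (leq_maxl N1 1) (leq_addl t N)).
  have e0 := ee_ge0 (t + N).
  have e1 := ee_ge0 (t + N).+1.
  have s1 : E * ee (t + N) + E * YY E (t + N) <= E * (1 + H) * ee (t + N).
    have : E * YY E (t + N) <= E * (H * ee (t + N)) by apply: ler_wpM2l.
    lra.
  have s2 : E * (1 + H) * ee (t + N) <= E * (1 + H) * ((2%:R * (E + 1))^-1 * ee (t + N).+1).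
    by apply: ler_wpM2l => //; apply: mulr_ge0 => //; lra.
  have s3 : E * (1 + H) * ((2%:R * (E + 1))^-1 * ee (t + N).+1) = (E * (2%:R * (E + 1))^-1) * ((1 + H) * ee (t + N).+1).
    by ring.
  have s4 : (E * (2%:R * (E + 1))^-1) * ((1 + H) * ee (t + N).+1) <= 2%:R^-1 * ((1 + H) * ee (t + N).+1).
    by apply: ler_wpM2r => //; apply: mulr_ge0 => //; lra.
  have s5 : 2%:R^-1 * ((1 + H) * ee (t + N).+1) <= H * ee (t + N).+1.
    rewrite mulrA; apply: ler_wpM2r => //.
    rewrite mulrDr mulr1; have : 2%:R^-1 * H = H / 2%:R by rewrite mulrC.
    move=> ->; have : (2%:R : R)^-1 = 1 / 2%:R by rewrite div1r.
    move=> ->; lra.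
  lra.
have d2 : 0 < eps / ((E + 1) * (1 + H)) by apply: divr_gt0 => //; apply: mulr_gt0; lra.
have [N2 HN2] := ee_ratio d2.
exists (maxn N N2).+1 => n; case: n => [//|n]; rewrite ltnS geq_max => /andP[h1 h2].
rewrite YYS.
have b := bound n h1.
have r := HN2 n h2.
have e0 := ee_ge0 n.
have e1 := ee_ge0 n.+1.
have s1 : E * ee n + E * YY E n <= (E + 1) * (1 + H) * ee n.
  have : E * YY E n <= E * (H * ee n) by apply: ler_wpM2l.
  have : 0 <= H * ee n by apply: mulr_ge0 => //; lra.
  nra.
have s2 : (E + 1) * (1 + H) * ee n <= (E + 1) * (1 + H) * (eps / ((E + 1) * (1 + H)) * ee n.+1).
  by apply: ler_wpM2l => //; apply: mulr_ge0; lra.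
have s3 : (E + 1) * (1 + H) * (eps / ((E + 1) * (1 + H)) * ee n.+1) = eps * ee n.+1.
  field; lra.
lra.
Qed.

Arguments tt : simpl never.

Lemma sum_drop01 (F : nat -> R) m : F 0%nat = 0 ->
  \sum_(k < m.+2 | (k : nat) != 1%nat) F k = \sum_(i < m) F i.+2.
Proof.
move=> F0; rewrite big_mkcond !big_ord_recl /= F0 !add0r.
by apply: eq_bigr => i _.
Qed.

Lemma main_anal rho : 0 <= rho -> forall eps, 0 < eps -> exists N, forall n, (N <= n)%nat ->
  \sum_(k < n.+1 | (k : nat) != 1%nat) rho ^+ k * tt a k n <= eps * a n.
Proof.
move=> r0 eps eps0.
have [C [C0 HC]] := PP_le_ex.
pose E := rho * C.
have E0 : 0 <= E by apply: mulr_ge0 => //; lra.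
have [B [N1 [B0 HB]]] := ee_le_a.
have rB : 0 <= rho * B by apply: mulr_ge0 => //; lra.
have e' : 0 < eps / (rho * B + 1) by apply: divr_gt0 => //; lra.
have [N2 HN2] := YY_small E0 e'.
exists (maxn (maxn N1 N2) 1) => n; rewrite !geq_max => /andP[/andP[h1 h2] h3].
have key : \sum_(k < n.+1 | (k : nat) != 1%nat) rho ^+ k * tt a k n <= rho * YY E n.
  case: n h1 h2 h3 => [//|n'] _ _ _.
  rewrite (@sum_drop01 (fun k => rho ^+ k * tt a k n'.+1)); last by rewrite tt0 // mulr0.
  rewrite /YY big_ord_recr /= mulrDr.
  apply: (@le_trans _ _ (\sum_(i < n') rho * (E ^+ i.+1 * ee (subn n' i)))).
    apply: ler_sum => i _.
    have hb := tt_bound (ltW C0) HC (k := i.+1) (m := n'.+1) (ltac:(case: i => i /= ?; lia)).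
    rewrite (_ : subn n'.+1 i.+1 = subn n' i) in hb; last by lia.
    have -> : rho * (E ^+ i.+1 * ee (subn n' i)) = rho ^+ i.+2 * (C ^+ i.+1 * ee (subn n' i)).
      by rewrite /E exprMn !exprS; ring.
    apply: ler_wpM2l => //; exact: exprn_ge0.
  rewrite -mulr_sumr; rewrite -[X in X <= _]addr0; apply: lerD => //.
  by apply: mulr_ge0 => //; apply: mulr_ge0; [exact: exprn_ge0|exact: ee_ge0].
apply: (le_trans key).
have y := HN2 n h2.
have b := HB n h1.
have y2 : rho * YY E n <= rho * (eps / (rho * B + 1) * ee n) by apply: ler_wpM2l.
have y3 : rho * (eps / (rho * B + 1) * ee n) <= rho * (eps / (rho * B + 1) * (B * a n)).
  apply: ler_wpM2l => //; apply: ler_wpM2l => //; exact: ltW.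
have y4 : rho * (eps / (rho * B + 1) * (B * a n)) = (rho * B) / (rho * B + 1) * eps * a n.
  by field; lra.
have y5 : (rho * B) / (rho * B + 1) <= 1.
  by rewrite ler_pdivrMr; lra.
have an : 0 <= a n by [].
have : (rho * B) / (rho * B + 1) * eps * a n <= eps * a n.
  rewrite -mulrA; rewrite -[X in _ <= X]mul1r; apply: ler_wpM2r => //.
  by apply: mulr_ge0 => //; lra.
lra.
Qed.

End Anal.


Lemma rsum_map (T : Type) (F : T -> R) s : rsum_list (map F s) = \sum_(x <- s) F x.
Proof. by elim: s => [|x s IH]; rewrite ?big_nil ?big_cons //= IH. Qed.

Lemma rprod_map (T : Type) (F : T -> R) s : rprod_list (map F s) = \prod_(x <- s) F x.
Proof. by elim: s => [|x s IH]; rewrite ?big_nil ?big_cons //= IH. Qed.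

Lemma cw_eq f g n E : comp_weight f g n E =
  \sum_(P : {set {set 'I_n}} | partition P [set: 'I_n] && E P) f #|P| * \prod_(B in P) g #|B|.
Proof.
rewrite /comp_weight rsum_map big_filter big_enum_cond.
apply: eq_big => [P|P _]; first by rewrite /set_partitions inE.
by rewrite rprod_map big_enum.
Qed.

Lemma part_card n (P : {set {set 'I_n}}) : partition P [set: 'I_n] -> (#|P| <= n)%nat.
Proof.
move=> pP; have := card_partition pP; rewrite cardsT card_ord => E.
rewrite [X in (_ <= X)%nat]E.
rewrite -sum1_card; apply: leq_sum => B BP.
by rewrite card_gt0; apply: (partition_neq0 pP BP).
Qed.

Lemma cw_total f g n : comp_weight f g n (fun _ => true) =
  \sum_(k < n.+1) f k * Om g k [set: 'I_n].
Proof.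
rewrite cw_eq (partition_big (fun P : {set {set 'I_n}} => (inord #|P| : 'I_n.+1)) xpredT) //=.
apply: eq_bigr => k _; rewrite /Om mulr_sumr.
apply: eq_big => [P|P /andP[pP /eqP E]].
  rewrite andbT; apply/andP/andP => -[pP /eqP E]; split => //; apply/eqP.
    by rewrite -E inordK // ltnS part_card.
  by apply: val_inj; rewrite /= inordK -?E // ltnS part_card.
by rewrite -E inordK // ltnS part_card //; case/andP: pP.
Qed.

Lemma cw_single f g n : comp_weight f g n (fun P => #|P| == 1%nat) =
  f 1%nat * Om g 1 [set: 'I_n].
Proof.
by rewrite cw_eq /Om mulr_sumr; apply: eq_bigr => P /andP[_ /eqP ->].
Qed.

Lemma csum1 e j M : csum e 1 j M = if (0 < j)%nat && (j < M)%nat then e j else 0.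
Proof.
rewrite /= rsum_map.
change (\sum_(1 <= i < M) (if (i <= j)%nat then Rmult (e i) (if subn j i == 0%nat then R1 else R0) else R0)
  = if (0 < j)%nat && (j < M)%nat then e j else 0).
case: ifP => h.
  rewrite (bigD1_seq j) ?iota_uniq //=; last by rewrite mem_index_iota; lia.
  rewrite leqnn subnn eqxx big1_seq ?addr0 ?RmultE ?mulr1 // => i /andP[ij _].
  case: ifP => // ij2; have -> : (subn j i == 0%nat) = false by apply/negbTE; lia.
  by rewrite RmultE mulr0.
rewrite big1_seq // => i /andP[_]; rewrite mem_index_iota => iM.
case: ifP => // ij; case: ifP => ji; last by rewrite RmultE mulr0.
exfalso; move/negbT: h; lia.
Qed.

Lemma conv_sum2 e n : conv_sum e 2 n = conv2 e n.
Proof.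
rewrite /conv_sum /= rsum_map /conv2.
change (\sum_(1 <= i < subn n 1) (if (i <= n)%nat then Rmult (e i) (csum e 1 (subn n i) (subn n 1)) else R0)
  = \sum_(2 <= i < subn n 1) e i * e (subn n i)).
case: (ltnP 1 (subn n 1)) => h; last first.
  by rewrite !big_geq //; lia.
rewrite big_ltn // csum1.
have -> : (0 < subn n 1)%nat && (subn n 1 < subn n 1)%nat = false by rewrite ltnn andbF.
rewrite RmultE mulr0.
case: ifP => _; rewrite add0r; apply: eq_big_nat => i /andP[i2 iM];
  rewrite csum1 ifT; try lia; rewrite ifT ?RmultE //; lia.
Qed.

Lemma re4 (x y z w : R) : x * (y / z * w) = y * (x / z * w).
Proof. ring. Qed.

Lemma final (f g : nat -> R) :
  (forall n, 0 <= f n) -> (forall n, 0 <= g n) -> g 0 = 0 ->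
  (exists x l, 0 < x /\ forall k, f k / (k`!)%:R * x ^+ k <= l) ->
  (exists I, forall i, (I <= i)%nat -> 0 < g i / (i`!)%:R) ->
  (forall eps, 0 < eps -> exists N, forall n, (N <= n)%nat ->
      conv2 (fun s => g s / (s`!)%:R) n <= eps * (g (subn n 1) / ((subn n 1)`!)%:R)) ->
  0 < f 1%nat -> 0 < g 1%nat -> 0 < g 2%nat ->
  forall eps, 0 < eps -> exists N, forall n, (N <= n)%nat ->
     1 - eps < comp_weight f g n (fun P => #|P| == 1%nat) / comp_weight f g n (fun _ => true) <= 1.
Proof.
move=> hf hg hg0 [x [l [x0 hxl]]] [I hI] hconv hf1 hg1 hg2 eps eps0.
pose a := fun s => g s / (s`!)%:R.
have fpos : forall s, 0 < (s`!)%:R :> R by move=> s; rewrite ltr0n fact_gt0.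
have ha0 : a 0%nat = 0 by rewrite /a hg0 mul0r.
have hapos : forall i, 0 <= a i by move=> i; rewrite /a; apply: divr_ge0 => //; exact: ltW.
have ha1 : 0 < a 1%nat by rewrite /a divr_gt0.
have ha2 : 0 < a 2%nat by rewrite /a divr_gt0.
have l0 : 0 <= l by apply: le_trans (hxl 0%nat); rewrite expr0 mulr1; apply: divr_ge0 => //; exact: ltW.
pose rho := x^-1.
have rho0 : 0 <= rho by rewrite /rho invr_ge0; exact: ltW.
have cb : forall k, f k / (k`!)%:R <= l * rho ^+ k.
  move=> k; have xk : 0 < x ^+ k by apply: exprn_gt0.
  rewrite /rho exprVn ler_pdivlMr //; exact: hxl.
pose eps' := eps * f 1%nat / (2%:R * (l + 1)).
have eps'0 : 0 < eps' by rewrite /eps'; apply: divr_gt0; [apply: mulr_gt0|]; lra.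
have [N HN] := main_anal ha0 hapos ha1 ha2 hconv (ex_intro _ I hI) rho0 eps'0.
exists (maxn (maxn N I) 1) => n; rewrite !geq_max => /andP[/andP[hN hIn] hn1].
have an : 0 < a n by apply: hI.
rewrite cw_single cw_total.
have Om_e := fun k => Om_tt hg0 k [set: 'I_n].
rewrite cardsT card_ord in Om_e.
rewrite (bigD1 (@Ordinal n.+1 1%nat (ltac:(lia)))) //=.
rewrite !Om_e (tt1 ha1 ha2).
set S := f 1%nat * _.
set Rr := \sum_(i < n.+1 | _) _.
have Sv : S = f 1%nat * ((n`!)%:R * a n).
  rewrite /S; congr (_ * _); rewrite /a; congr (_ * _).
  by rewrite [X in _ / X](_ : _ = 1) ?divr1.
have Spos : 0 < S by rewrite Sv; apply: mulr_gt0 => //; apply: mulr_gt0 => //.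
have Rpos : 0 <= Rr.
  apply: sumr_ge0 => k _; rewrite Om_e; apply: mulr_ge0 => //; apply: mulr_ge0.
    by apply: divr_ge0; exact: ltW.
  exact: tt_ge0.
have Rb : Rr <= (n`!)%:R * (l * (eps' * a n)).
  have := HN n hN => H.
  apply: (@le_trans _ _ ((n`!)%:R * (l * \sum_(k < n.+1 | (k : nat) != 1%nat) rho ^+ k * tt a k n))); last first.
    apply: ler_wpM2l; first exact: ltW.
    by apply: ler_wpM2l.
  rewrite mulr_sumr mulr_sumr; apply: ler_sum => k /negP hk1.
  have hk : (k : nat) != 1%nat.
    apply/negP => /eqP e; apply: hk1; apply/eqP/val_inj => /=; exact: e.
  rewrite Om_e.
  have t0 := tt_ge0 hapos k n.
  have := cb k => ck.
  rewrite re4.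
  apply: ler_wpM2l; first exact: ltW.
  rewrite mulrA; apply: ler_wpM2r => //.
clearbody S Rr.
clear Om_e HN hconv cb hxl.
have key : Rr / (S + Rr) <= eps / 2%:R.
  apply: (@le_trans _ _ (Rr / S)).
    rewrite ler_pdivrMr; last lra.
    have e2 : Rr / S * (S + Rr) = Rr + Rr * (Rr / S) by field; lra.
    rewrite e2; have : 0 <= Rr * (Rr / S) by apply: mulr_ge0 => //; apply: divr_ge0 => //; lra.
    lra.
  rewrite ler_pdivrMr //.
  apply: (le_trans Rb).
  rewrite Sv /eps'.
  have nf := fpos n.
  have : (n`!)%:R * (l * (eps * f 1%nat / (2%:R * (l + 1)) * a n)) =
     (eps / 2%:R * (f 1%nat * ((n`!)%:R * a n))) * (l / (l + 1)) by field; lra.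
  move=> ->.
  rewrite -[X in _ <= X]mulr1; apply: ler_wpM2l.
    apply: mulr_ge0; first by apply: divr_ge0; lra.
    by apply: mulr_ge0; [lra|apply: mulr_ge0; [exact: ltW|exact: ltW]].
  by rewrite ler_pdivrMr; lra.
have -> : S / (S + Rr) = 1 - Rr / (S + Rr) by field; lra.
have : 0 <= Rr / (S + Rr) by apply: divr_ge0; lra.
lra.
Qed.

Local Close Scope ring_scope.
Delimit Scope ring_scope with ring.
Delimit Scope R_scope with R.

Lemma egfE (w : nat -> R) k : egf_coef w k = (w k / (k`!)%:R)%ring.
Proof. by rewrite /egf_coef RdivE INRE Rstruct.factE. Qed.

Lemma pser_bound (c : nat -> R) (x l : R) : (forall k, 0 <= c k)%ring -> (0 < x)%ring ->
  Pser c x l -> forall k, (c k * x ^+ k <= l)%ring.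
Proof.
move=> c0 x0 hP k.
have t0' : forall m, (0 <= c m * x ^+ m)%ring.
  move=> m; apply: mulr_ge0 => //; apply: exprn_ge0; exact: ltW.
have t0 : forall m, (0 <= c m * x ^ m)%R.
  by move=> m; apply/RleP; rewrite RpowE.
have hg : Un_growing (sum_f_R0 (fun m => c m * x ^ m)%R).
  move=> m; apply/RleP; rewrite tech5 RplusE RmultE; have := t0' m.+1; rewrite -RpowE; lra.
have := @growing_ineq _ _ hg hP k.
have : (c k * x ^ k <= sum_f_R0 (fun m => c m * x ^ m) k)%R.
  case: k => [|k]; first by apply/RleP; rewrite /= lexx.
  have := cond_pos_sum _ k t0; move/RleP => h; apply/RleP; rewrite tech5 RplusE RmultE.
  rewrite R0E in h; lra.
move/RleP => h1 /RleP h2; rewrite RmultE in h1; rewrite -RpowE; lra.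
Qed.

Theorem mainTheorem10 (f g : nat -> R)
  (* total weights |F[n]|_upsilon, |G[n]|_gamma : nonnegative, G[empty] = empty *)
  (hf : forall n, (0 <= f n)%R)
  (hg : forall n, (0 <= g n)%R)
  (hg0 : g 0%nat = 0%R)
  (* G^gamma(z) = sum a_i z^i has radius of convergence 0 *)
  (hGrad : forall x : R, x <> 0%R -> ~ (exists l, Pser (egf_coef g) x l))
  (* F^upsilon(z) has positive radius of convergence *)
  (hFrad : exists x : R, (0 < x)%R /\ exists l, Pser (egf_coef f) x l)
  (* periodicity / eventual positivity for some d >= 1 *)
  (hper : exists d : nat, (1 <= d)%nat /\
      (forall i, (i mod d)%nat <> (1 mod d)%nat -> egf_coef g i = 0%R) /\
      exists I : nat, forall i, (I <= i)%nat -> (i mod d)%nat = (1 mod d)%nat ->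
        (0 < egf_coef g i)%R)
  (* sum_{i_1+..+i_k=n, 1<=i_j<n-(k-1)} a_{i_1}..a_{i_k} = o(a_{n-(k-1)}) *)
  (hlittleo : forall k : nat, (2 <= k)%nat ->
      forall eps : R, (0 < eps)%R -> exists N : nat, forall n : nat, (N <= n)%nat ->
        (Rabs (conv_sum (egf_coef g) k n) <= eps * egf_coef g (n - (k - 1)))%R)
  (* additional hypotheses *)
  (hF1 : (0 < egf_coef f 1)%R)
  (ha1 : (0 < egf_coef g 1)%R)
  (ha2 : (0 < egf_coef g 2)%R) :
  Un_cv (prob_single_component f g) 1%R.
Proof.
have hf' : forall n, (0 <= f n)%ring by move=> n; apply/RleP.
have hg' : forall n, (0 <= g n)%ring by move=> n; apply/RleP.
have fpos : forall s, (0 < (s`!)%:R :> R)%ring by move=> s; rewrite ltr0n fact_gt0.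
have hX : exists x l, (0 < x)%ring /\ forall k, (f k / (k`!)%:R * x ^+ k <= l)%ring.
  case: hFrad => x [/RltP x0 [l hl]]; exists x, l; split => //.
  move=> k; rewrite -egfE; apply: (pser_bound _ x0 hl) => m.
  by rewrite egfE; apply: divr_ge0 => //; exact: ltW.
have hI : exists I, forall i, (I <= i)%nat -> (0 < g i / (i`!)%:R)%ring.
  case: hper => d [d1 [hz [I hI]]].
  have d1' : d = 1%nat.
    apply/eqP; apply/negPn/negP => dne.
    have h2 : (2 mod d)%nat <> (1 mod d)%nat.
      case: (eqVneq d 2) => [->|dn2]; first by discriminate.
      rewrite !Nat.mod_small; lia.
    by move: ha2; rewrite (hz _ h2) => /RltP; rewrite ltxx.
  subst d; exists I => i iI; rewrite -egfE; apply/RltP; apply: hI => //.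
have hconv : forall eps, (0 < eps)%ring -> exists N, forall n, (N <= n)%nat ->
      (conv2 (fun s => g s / (s`!)%:R) n <= eps * (g (subn n 1) / ((subn n 1)`!)%:R))%ring.
  move=> eps /RltP eps0; have [N HN] := hlittleo 2 isT eps eps0.
  exists N => n /HN h.
  have e : (fun s => g s / (s`!)%:R)%ring = egf_coef g by apply: boolp.funext => s; rewrite egfE.
  rewrite e -conv_sum2 -egfE; apply/RleP.
  apply: Rle_trans (Rle_abs _) _; exact: h.
have f1 : (0 < f 1%nat)%ring by move/RltP: hF1; rewrite egfE divr1.
have g1 : (0 < g 1%nat)%ring by move/RltP: ha1; rewrite egfE divr1.
have g2 : (0 < g 2%nat)%ring.
  move/RltP: ha2; rewrite egfE => h; have : (0 <= g 2%nat)%ring by [].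
  rewrite le0r => /orP[/eqP e|//]; move: h; rewrite e mul0r ltxx //.
move=> eps /RltP eps0.
have [N HN] := final hf' hg' hg0 hX hI hconv f1 g1 g2 eps0.
exists N => n /ssrnat.leP nN; have /andP[h1 h2] := HN n nN.
rewrite /R_dist /prob_single_component; apply: Rabs_def1.
  apply/RltP; rewrite RminusE RdivE R1E; have : (0 < eps)%ring by []; lra.
apply/RltP; rewrite RminusE RdivE RoppE R1E; lra.
Qed.
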